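(* Let $(X,d,\ll,\le,\tau)$ be a Lorentzian length space such that the metric space $(X,d)$ is locally compact. If $(X,d,\ll,\le,\tau)$ is stably causal, then it is strongly causal.
   Context: A causal space $(X,\ll,\le)$ is a set $X$ with two transitive relations $\ll,\le$ such that $\le$ is reflexive and $x\ll y\Rightarrow x\le y$; write $p<q$ if $p\le q$ and $p\neq q$. Set $I^+(x)=\{y: x\ll y\}$, $I^-(x)=\{y: y\ll x\}$, $J^+(x)=\{y:x\le y\}$, $J^-(x)=\{y:y\le x\}$. A Lorentzian pre-length space $(X,d,\ll,\le,\tau)$ is a causal space together with a metric $d$ on $X$ and a function $\tau:X\times X\to[0,\infty]$ that is lower semicontinuous with respect to the topology of $d$, satisfies $\tau(x,z)\ge\tau(x,y)+\tau(y,z)$ whenever $x\le y\le z$, $\tau(x,y)=0$ if $x\not\le y$, and $\tau(x,y)>0\iff x\ll y$. All topological notions refer to the metric topology of $d$. A future directed causal (resp. timelike) curve is a non-constant Lipschitz map $\gamma:I\to X$ ($I\subset\mathbb R$ an interval) with $\gamma(s)\le\gamma(t)$ (resp. $\gamma(s)\ll\gamma(t)$) for all $s<t$. For a future directed causal $\gamma:[a,b]\to X$, $L_\tau(\gamma)=\inf\sum_{i=0}^{N-1}\tau(\gamma(t_i),\gamma(t_{i+1}))$ over all partitions $a=t_0<\dots<t_N=b$. The space is causally path connected if whenever $x\le y$ (resp. $x\ll y$) there is a future directed causal (resp. timelike) curve from $x$ to $y$. For open $U\subset X$, $p\le_U q$ means there is a future directed causal curve from $p$ to $q$ with image in $U$.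 A neighborhood $U$ is causally closed if whenever $p_n\le_U q_n$ with $p_n\to p\in U$, $q_n\to q\in U$, then $p\le_U q$; the space is locally causally closed if every point has a causally closed neighborhood. The space is localizable if every $x$ has a neighborhood $\Omega_x$ such that: (i) all causal curves contained in $\Omega_x$ have uniformly bounded $d$-length; (ii) there is a continuous $\omega_x:\Omega_x\times\Omega_x\to[0,\infty)$ such that $(\Omega_x,d|_{\Omega_x\times\Omega_x},\ll|_{\Omega_x},\le|_{\Omega_x},\omega_x)$ is a Lorentzian pre-length space, and $I^\pm(y)\cap\Omega_x\ne\emptyset$ for every $y\in\Omega_x$; (iii) for all $p,q\in\Omega_x$ with $p<q$ there is a future causal curve $\gamma_{p,q}$ from $p$ to $q$ with $L_\tau(\gamma_{p,q})\ge L_\tau(\gamma)$ for every future causal curve $\gamma\subset\Omega_x$ from $p$ to $q$, and $L_\tau(\gamma_{p,q})=\omega_x(p,q)$. A Lorentzian length space is a causally path connected, locally causally closed, localizable Lorentzian pre-length space with $\tau(x,y)=\sup\{L_\tau(\gamma):\gamma$ a future causal curve from $x$ to $y\}$. Causality notions: $K^+\subset X\times X$ is the smallest relation that is transitive, closed in $X\times X$, and contains $J^+=\{(x,y):x\le y\}$; stably causal means $K^+$ is antisymmetric. The Alexandrov topology is the topology on $X$ with subbase $\{I^+(x)\cap I^-(y): x,y\in X\}$; strongly causal means the Alexandrov topology coincides with the metric topology of $d$. *)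

(* Defs.v *)
From Stdlib Require Import Reals List.
From Coquelicot Require Import Coquelicot.
Open Scope R_scope.
Set Implicit Arguments.

Section LLS.
Variable X : Type.
Variable d : X -> X -> R.
Variables ll le : X -> X -> Prop.

Definition is_metric : Prop :=
  (forall x y, 0 <= d x y) /\ (forall x y, d x y = 0 <-> x = y) /\
  (forall x y, d x y = d y x) /\ (forall x y z, d x z <= d x y + d y z).

Definition d_open (U : X -> Prop) : Prop :=
  forall x, U x -> exists r, 0 < r /\ forall y, d x y < r -> U y.

Definition neighborhood (x : X) (N : X -> Prop) : Prop :=
  exists V, d_open V /\ V x /\ forall y, V y -> N y.

Definition closed_rel (Rel : X -> X -> Prop) : Prop :=
  forall a b, ~ Rel a b -> exists r, 0 < r /\
    forall a' b', d a a' < r -> d b b' < r -> ~ Rel a' b'.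

Definition d_compact (K : X -> Prop) : Prop :=
  forall (I : Type) (U : I -> X -> Prop), (forall i, d_open (U i)) ->
    (forall x, K x -> exists i, U i x) ->
    exists l : list I, forall x, K x -> exists i, In i l /\ U i x.

Definition locally_compact : Prop :=
  forall x, exists K, neighborhood x K /\ d_compact K.

Definition converges (s : nat -> X) (p : X) : Prop :=
  forall eps, 0 < eps -> exists N, forall n, (N <= n)%nat -> d (s n) p < eps.

Definition transitive_on (S : X -> Prop) (Rel : X -> X -> Prop) : Prop :=
  forall x y z, S x -> S y -> S z -> Rel x y -> Rel y z -> Rel x z.

Definition causal_space_on (S : X -> Prop) : Prop :=
  transitive_on S ll /\ transitive_on S le /\ (forall x, S x -> le x x) /\
  (forall x y, S x -> S y -> ll x y -> le x y).

Definition lsc_on (S : X -> Prop) (t : X -> X -> Rbar) : Prop :=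
  forall x y (r : R), S x -> S y -> Rbar_lt r (t x y) ->
    exists delta, 0 < delta /\ forall x' y', S x' -> S y' ->
      d x x' < delta -> d y y' < delta -> Rbar_lt r (t x' y').

Definition LPLS_on (S : X -> Prop) (t : X -> X -> Rbar) : Prop :=
  causal_space_on S /\
  (forall x y, S x -> S y -> Rbar_le (Finite 0) (t x y)) /\
  lsc_on S t /\
  (forall x y z, S x -> S y -> S z -> le x y -> le y z ->
     Rbar_le (Rbar_plus (t x y) (t y z)) (t x z)) /\
  (forall x y, S x -> S y -> ~ le x y -> t x y = Finite 0) /\
  (forall x y, S x -> S y -> (Rbar_lt (Finite 0) (t x y) <-> ll x y)).

Definition whole (x : X) : Prop := True.

Definition is_interval (I : R -> Prop) : Prop :=
  forall s t u, I s -> I u -> s <= t <= u -> I t.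

Definition lipschitz_on (I : R -> Prop) (g : R -> X) : Prop :=
  exists L, 0 <= L /\ forall s t, I s -> I t -> d (g s) (g t) <= L * Rabs (s - t).

Definition fd_causal_curve (I : R -> Prop) (g : R -> X) : Prop :=
  is_interval I /\ lipschitz_on I g /\
  (exists s t, I s /\ I t /\ g s <> g t) /\
  (forall s t, I s -> I t -> s < t -> le (g s) (g t)).

Definition fd_timelike_curve (I : R -> Prop) (g : R -> X) : Prop :=
  is_interval I /\ lipschitz_on I g /\
  (exists s t, I s /\ I t /\ g s <> g t) /\
  (forall s t, I s -> I t -> s < t -> ll (g s) (g t)).

Definition cint (a b : R) (t : R) : Prop := a <= t <= b.

Definition causal_from_to (g : R -> X) (a b : R) (p q : X) : Prop :=
  a < b /\ fd_causal_curve (cint a b) g /\ g a = p /\ g b = q.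

Definition timelike_from_to (g : R -> X) (a b : R) (p q : X) : Prop :=
  a < b /\ fd_timelike_curve (cint a b) g /\ g a = p /\ g b = q.

(* partitions: t0 < t1 < ... < tN given as t0 and the list [t1;...;tN] *)
Fixpoint incr_from (t0 : R) (l : list R) : Prop :=
  match l with nil => True | t1 :: l' => t0 < t1 /\ incr_from t1 l' end.

Fixpoint chain_sum (f : R -> R -> Rbar) (t0 : R) (l : list R) : Rbar :=
  match l with
  | nil => Finite 0
  | t1 :: l' => Rbar_plus (f t0 t1) (chain_sum f t1 l')
  end.

Definition is_partition (a b : R) (l : list R) : Prop :=
  l <> nil /\ incr_from a l /\ last l a = b.

Definition L_tau (tau : X -> X -> Rbar) (g : R -> X) (a b : R) : Rbar :=
  Rbar_glb (fun v => exists l, is_partition a b l /\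
               v = chain_sum (fun s t => tau (g s) (g t)) a l).

Definition lt_c (x y : X) : Prop := le x y /\ x <> y.

Definition causally_path_connected : Prop :=
  (forall x y, lt_c x y -> exists g a b, causal_from_to g a b x y) /\
  (forall x y, ll x y -> exists g a b, timelike_from_to g a b x y).

Definition le_in (U : X -> Prop) (p q : X) : Prop :=
  p = q \/ exists g a b, causal_from_to g a b p q /\ forall t, cint a b t -> U (g t).

Definition causally_closed (U : X -> Prop) : Prop :=
  forall (pn qn : nat -> X) p q,
    (forall n, le_in U (pn n) (qn n)) -> converges pn p -> converges qn q ->
    U p -> U q -> le_in U p q.

Definition locally_causally_closed : Prop :=
  forall x, exists U, d_open U /\ U x /\ causally_closed U.

Definition localizable (tau : X -> X -> Rbar) : Prop :=
  forall x, exists (Om : X -> Prop) (om : X -> X -> R),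
    neighborhood x Om /\
    (* (i) uniformly bounded d-length of causal curves in Om *)
    (exists C, forall J g, fd_causal_curve J g -> (forall t, J t -> Om (g t)) ->
       forall t0 l, J t0 -> List.Forall J l -> incr_from t0 l ->
         Rbar_le (chain_sum (fun s t => Finite (d (g s) (g t))) t0 l) (Finite C)) /\
    (forall p q, Om p -> Om q -> 0 <= om p q) /\
    (forall p q eps, Om p -> Om q -> 0 < eps -> exists delta, 0 < delta /\
       forall p' q', Om p' -> Om q' -> d p p' < delta -> d q q' < delta ->
         Rabs (om p' q' - om p q) < eps) /\
    LPLS_on Om (fun p q => Finite (om p q)) /\
    (forall y, Om y -> (exists z, Om z /\ ll y z) /\ (exists z, Om z /\ ll z y)) /\
    (forall p q, Om p -> Om q -> lt_c p q ->
       exists g a b, causal_from_to g a b p q /\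
         (forall g' a' b', causal_from_to g' a' b' p q ->
            (forall t, cint a' b' t -> Om (g' t)) ->
            Rbar_le (L_tau tau g' a' b') (L_tau tau g a b)) /\
         L_tau tau g a b = Finite (om p q)).

(* tau(x,y) = sup of tau-lengths of future causal curves from x to y,
   with sup of the empty set = 0 *)
Definition tau_is_sup_length (tau : X -> X -> Rbar) : Prop :=
  forall x y, tau x y =
    Rbar_lub (fun v => v = Finite 0 \/
                exists g a b, causal_from_to g a b x y /\ v = L_tau tau g a b).

Definition LorentzianLengthSpace (tau : X -> X -> Rbar) : Prop :=
  is_metric /\ LPLS_on whole tau /\ causally_path_connected /\
  locally_causally_closed /\ localizable tau /\ tau_is_sup_length tau.

Definition K_plus (x y : X) : Prop :=
  forall Rel : X -> X -> Prop,
    (forall a b c, Rel a b -> Rel b c -> Rel a c) -> closed_rel Rel ->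
    (forall a b, le a b -> Rel a b) -> Rel x y.

Definition stably_causal : Prop :=
  forall x y, K_plus x y -> K_plus y x -> x = y.

Definition diamond (x y : X) (p : X) : Prop := ll x p /\ ll p y.

(* open in the Alexandrov topology: union of finite intersections of
   subbasic sets I^+(x) cap I^-(y) (empty intersection = X) *)
Definition alexandrov_open (U : X -> Prop) : Prop :=
  forall p, U p -> exists l : list (X * X),
    (forall xy, In xy l -> diamond (fst xy) (snd xy) p) /\
    (forall q, (forall xy, In xy l -> diamond (fst xy) (snd xy) q) -> U q).

Definition strongly_causal : Prop :=
  forall U : X -> Prop, alexandrov_open U <-> d_open U.

End LLS.

(* Main.v *)
Require Import Defs.
From Stdlib Require Import Reals List Lra Lia Classical ClassicalEpsilon.
From Coquelicot Require Import Coquelicot.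
Open Scope R_scope.
Module P1.
Set Implicit Arguments.

Lemma m_refl X (d : X -> X -> R) : is_metric d -> forall x, d x x = 0.
Proof. intros [_ [H _]] x. apply H; reflexivity. Qed.
Lemma m_sym X (d : X -> X -> R) : is_metric d -> forall x y, d x y = d y x.
Proof. intros [_ [_ [H _]]]; auto. Qed.
Lemma m_tri X (d : X -> X -> R) : is_metric d -> forall x y z, d x z <= d x y + d y z.
Proof. intros [_ [_ [_ H]]]; auto. Qed.
Lemma m_pos X (d : X -> X -> R) : is_metric d -> forall x y, 0 <= d x y.
Proof. intros [H _]; auto. Qed.

Definition clamp (a b t : R) := Rmax a (Rmin b t).

Lemma clamp_lip a b s t : a <= b -> Rabs (clamp a b s - clamp a b t) <= Rabs (s - t).
Proof.
  intros Hab. unfold clamp, Rmax, Rmin.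
  repeat destruct Rle_dec; unfold Rabs; repeat destruct Rcase_abs; lra.
Qed.

Lemma clamp_in a b t : a <= b -> a <= clamp a b t <= b.
Proof. intros Hab. unfold clamp, Rmax, Rmin. repeat destruct Rle_dec; lra. Qed.

Lemma clamp_id a b t : a <= t <= b -> clamp a b t = t.
Proof. intros H. unfold clamp, Rmax, Rmin. repeat destruct Rle_dec; lra. Qed.

Lemma my_IVT (f : R -> R) a b L c : a < b -> 0 <= L ->
  (forall s t, a <= s <= b -> a <= t <= b -> Rabs (f s - f t) <= L * Rabs (s - t)) ->
  f a < c -> c < f b -> exists z, a <= z <= b /\ f z = c.
Proof.
  intros Hab HL Hf Ha Hb.
  set (h := fun t => f (clamp a b t) - c).
  assert (Hc : continuity h).
  { intros x eps Heps. exists (eps / (L + 1)). split.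
    - apply Rdiv_lt_0_compat; lra.
    - intros y [_ Hy]. simpl in *. unfold R_dist in *. unfold h.
      replace (f (clamp a b y) - c - (f (clamp a b x) - c)) with
        (f (clamp a b y) - f (clamp a b x)) by ring.
      eapply Rle_lt_trans.
      { apply Hf; apply clamp_in; lra. }
      eapply Rle_lt_trans.
      { apply Rmult_le_compat_l; [lra|]. apply clamp_lip; lra. }
      assert (Hd : Rabs (y - x) * (L+1) < eps).
      { apply (Rmult_lt_compat_r (L+1)) in Hy; [|lra].
        unfold Rdiv in Hy. rewrite Rmult_assoc, Rinv_l in Hy; lra. }
      pose proof (Rabs_pos (y - x)). nra. }
  destruct (IVT h a b Hc Hab) as [z [Hz Hz0]].
  - unfold h. rewrite clamp_id; lra.
  - unfold h. rewrite clamp_id; lra.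
  - exists z. split; auto. unfold h in Hz0. rewrite clamp_id in Hz0; lra.
Qed.
End P1.
Import P1.
Module P2.

Fixpoint sumN {A} (l : list (A * nat)) : nat :=
  match l with nil => 0%nat | i :: l' => (snd i + sumN l')%nat end.

Lemma sumN_in {A} (l : list (A * nat)) i : In i l -> (snd i <= sumN l)%nat.
Proof. induction l; simpl; intros H; [contradiction|]. destruct H; subst; [lia|].
  specialize (IHl H). lia. Qed.

Lemma cluster X (d : X -> X -> R) (K : X -> Prop) (r : nat -> X) :
  is_metric d -> d_compact d K -> (forall n, K (r n)) ->
  exists c, K c /\ forall rho, 0 < rho -> forall N, exists n, (N <= n)%nat /\ d c (r n) < rho.
Proof.
  intros Hm HK Hr. apply NNPP. intros Hno.
  set (U := fun (i : X * R * nat) y =>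
    K (fst (fst i)) /\ 0 < snd (fst i) /\
    (forall n, (snd i <= n)%nat -> snd (fst i) <= d (fst (fst i)) (r n)) /\
    d (fst (fst i)) y < snd (fst i)).
  destruct (HK _ U) as [l Hl].
  - intros i y [H1 [H2 [H3 H4]]]. exists (snd (fst i) - d (fst (fst i)) y). split; [lra|].
    intros z Hz. unfold U. repeat split; auto.
    pose proof (m_tri Hm (fst (fst i)) y z). lra.
  - intros y Ky. assert (Hc : ~ (forall rho, 0 < rho -> forall N, exists n, (N <= n)%nat /\ d y (r n) < rho)).
    { intros Hc. apply Hno. exists y; auto. }
    apply not_all_ex_not in Hc as [rho Hc].
    apply imply_to_and in Hc as [Hrho Hc].
    apply not_all_ex_not in Hc as [N Hc].
    exists (y, rho, N). unfold U; simpl. repeat split; auto.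
    + intros n Hn. apply Rnot_lt_le. intros Hlt. apply Hc. exists n; auto.
    + rewrite (m_refl Hm). auto.
  - destruct (Hl (r (sumN l)) (Hr _)) as [i [Hi [_ [_ [H3 H4]]]]].
    specialize (H3 (sumN l) (sumN_in _ _ Hi)). lra.
Qed.
End P2.
Import P2.
Module P3.
Set Implicit Arguments.

Lemma Iplus_open X (d : X -> X -> R) ll le tau x p :
  is_metric d -> LPLS_on d ll le (@whole X) tau -> ll x p ->
  exists delta, 0 < delta /\ forall q, d p q < delta -> ll x q.
Proof.
  intros Hm [_ [_ [Hlsc [_ [_ Hiff]]]]] Hxp.
  apply (Hiff x p I I) in Hxp.
  destruct (Hlsc x p 0 I I Hxp) as [delta [Hd H]].
  exists delta; split; auto. intros q Hq. apply (Hiff x q I I).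
  apply H; try exact I; auto; rewrite (m_refl Hm); auto.
Qed.

Lemma Iminus_open X (d : X -> X -> R) ll le tau y p :
  is_metric d -> LPLS_on d ll le (@whole X) tau -> ll p y ->
  exists delta, 0 < delta /\ forall q, d p q < delta -> ll q y.
Proof.
  intros Hm [_ [_ [Hlsc [_ [_ Hiff]]]]] Hxp.
  apply (Hiff p y I I) in Hxp.
  destruct (Hlsc p y 0 I I Hxp) as [delta [Hd H]].
  exists delta; split; auto. intros q Hq. apply (Hiff q y I I).
  apply H; try exact I; auto; rewrite (m_refl Hm); auto.
Qed.

Lemma diamonds_open X (d : X -> X -> R) ll le tau p (l : list (X * X)) :
  is_metric d -> LPLS_on d ll le (@whole X) tau ->
  (forall xy, In xy l -> diamond ll (fst xy) (snd xy) p) ->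
  exists rho, 0 < rho /\ forall q, d p q < rho -> forall xy, In xy l -> diamond ll (fst xy) (snd xy) q.
Proof.
  intros Hm HL. induction l as [|xy l IH]; intros Hin.
  - exists 1. split; [lra|]. intros q _ xy [].
  - destruct IH as [r0 [Hr0 H0]]. { intros; apply Hin; right; auto. }
    destruct (Hin xy (or_introl eq_refl)) as [H1 H2].
    destruct (Iplus_open _ _ Hm HL H1) as [r1 [Hr1 K1]].
    destruct (Iminus_open _ _ Hm HL H2) as [r2 [Hr2 K2]].
    exists (Rmin r0 (Rmin r1 r2)). split.
    + repeat apply Rmin_pos; auto.
    + intros q Hq xy' [<-|Hi].
      * split; [apply K1|apply K2]; unfold Rmin in Hq; repeat destruct Rle_dec; lra.
      * apply H0; auto. unfold Rmin in Hq; repeat destruct Rle_dec; lra.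
Qed.

Lemma curve_end X (d : X -> X -> R) ll g a b rho :
  a < b -> fd_timelike_curve d ll (cint a b) g -> 0 < rho ->
  (exists s, a <= s < b /\ d (g s) (g b) < rho) /\
  (exists s, a < s <= b /\ d (g a) (g s) < rho).
Proof.
  intros Hab [_ [[L [HL Hlip]] _]] Hrho.
  assert (HL1 : 0 < rho / (L + 1)) by (apply Rdiv_lt_0_compat; lra).
  assert (Hk : L * (rho / (L+1)) < rho).
  { unfold Rdiv. replace (L * (rho * / (L+1))) with (rho * (L / (L+1))) by (field; lra).
    assert (L / (L+1) < 1). { apply (Rmult_lt_reg_r (L+1)); [lra|].
      unfold Rdiv. rewrite Rmult_assoc, Rinv_l; lra. } nra. }
  split.
  - exists (Rmax a (b - rho/(L+1))).
    assert (a <= Rmax a (b - rho / (L + 1)) < b) by (unfold Rmax; destruct Rle_dec; lra).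
    split; auto.
    eapply Rle_lt_trans. apply Hlip; unfold cint; lra.
    eapply Rle_lt_trans; [|apply Hk]. apply Rmult_le_compat_l; auto.
    unfold Rmax; destruct Rle_dec; unfold Rabs; destruct Rcase_abs; lra.
  - exists (Rmin b (a + rho/(L+1))).
    assert (a < Rmin b (a + rho / (L + 1)) <= b) by (unfold Rmin; destruct Rle_dec; lra).
    split; auto.
    eapply Rle_lt_trans. apply Hlip; unfold cint; lra.
    eapply Rle_lt_trans; [|apply Hk]. apply Rmult_le_compat_l; auto.
    unfold Rmin; destruct Rle_dec; unfold Rabs; destruct Rcase_abs; lra.
Qed.

Lemma approx X (d : X -> X -> R) ll le tau p rho :
  LorentzianLengthSpace d ll le tau -> 0 < rho ->
  (exists x, ll x p /\ d p x < rho) /\ (exists y, ll p y /\ d p y < rho).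
Proof.
  intros [Hm [_ [[_ Hcpc] [_ [Hloc _]]]]] Hrho.
  destruct (Hloc p) as [Om [om [[V [_ [Vp VOm]]] [_ [_ [_ [_ [Hz _]]]]]]]].
  destruct (Hz p (VOm p Vp)) as [[z2 [_ H2]] [z1 [_ H1]]].
  split.
  - destruct (Hcpc _ _ H1) as [g [a [b [Hab [Hc [Ea Eb]]]]]].
    destruct (curve_end Hab Hc Hrho) as [[s [Hs Hd]] _].
    exists (g s). split.
    + destruct Hc as [_ [_ [_ Hmono]]]. rewrite <- Eb. apply Hmono; unfold cint; lra.
    + rewrite (m_sym Hm), <- Eb. auto.
  - destruct (Hcpc _ _ H2) as [g [a [b [Hab [Hc [Ea Eb]]]]]].
    destruct (curve_end Hab Hc Hrho) as [_ [s [Hs Hd]]].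
    exists (g s). split.
    + destruct Hc as [_ [_ [_ Hmono]]]. rewrite <- Ea. apply Hmono; unfold cint; lra.
    + rewrite <- Ea. auto.
Qed.
End P3.
Import P3.

Lemma choice_nat {A} (P : nat -> A -> Prop) : (forall n, exists x, P n x) -> exists f, forall n, P n (f n).
Proof.
  intros H. exists (fun n => proj1_sig (constructive_indefinite_description _ (H n))).
  intros n. exact (proj2_sig (constructive_indefinite_description _ (H n))).
Qed.

Lemma inv_S_lt N n : (0 < N)%nat -> (N <= n)%nat -> / INR (S n) < / INR N.
Proof.
  intros H1 H2. apply Rinv_lt_contravar.
  - apply Rmult_lt_0_compat; apply lt_0_INR; lia.
  - apply lt_INR; lia.
Qed.

Theorem proposition3p15 (X : Type) (d : X -> X -> R) (ll le : X -> X -> Prop)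
  (tau : X -> X -> Rbar) :
  LorentzianLengthSpace d ll le tau ->
  locally_compact d ->
  stably_causal d le ->
  strongly_causal d ll.
Proof.
  intros HLLS HLC HSC U.
  pose proof HLLS as [Hm [HL [[_ Hcpc] _]]].
  split.
  - intros HA p Up. destruct (HA p Up) as [l [Hl Hq]].
    destruct (diamonds_open _ Hm HL Hl) as [rho [Hrho H]].
    exists rho. split; auto.
  - intros HU p Up. apply NNPP. intros Hno.
    assert (H : forall x y, diamond ll x y p -> exists q, diamond ll x y q /\ ~ U q).
    { intros x y Hxy. apply NNPP. intros H0. apply Hno. exists ((x, y) :: nil). split.
      - intros xy [<-|[]]. simpl. auto.
      - intros q Hq. apply NNPP. intros nU. apply H0. exists q. split; auto.
        apply (Hq (x, y)). left; auto. }
    destruct (HU p Up) as [rU [HrU HUb]].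
    destruct (HLC p) as [K [[V [HV [Vp VK]]] HK]].
    destruct (HV p Vp) as [rV [HrV HVb]].
    set (eps := Rmin rU rV / 2).
    assert (Heps : 0 < eps /\ eps < rU /\ eps < rV).
    { unfold eps, Rmin. destruct Rle_dec; lra. }
    destruct HL as [[Htll [Htle [_ Hllle]]] _].
    assert (L3 : forall x y, ll x p -> ll p y -> d p x < eps ->
               exists r, le x r /\ le r y /\ d p r = eps).
    { intros x y Hx Hy Hdx.
      destruct (H x y (conj Hx Hy)) as [q [[Hxq Hqy] nUq]].
      assert (Hdq : rU <= d p q).
      { apply Rnot_lt_le. intros Hlt. apply nUq. apply HUb; auto. }
      destruct (Hcpc _ _ Hxq) as [g [a [b [Hab [Hc [Ea Eb]]]]]].
      pose proof Hc as [_ [[L [HL0 Hlip]] [_ Hmono]]].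
      destruct (@my_IVT (fun t => d p (g t)) a b L eps Hab HL0) as [z [Hz Hfz]].
      + intros s t Hs Ht. eapply Rle_trans; [|apply Hlip; unfold cint; lra].
        apply Rabs_le.
        pose proof (m_tri Hm p (g s) (g t)). pose proof (m_tri Hm p (g t) (g s)).
        rewrite (m_sym Hm (g t) (g s)) in *. lra.
      + simpl. rewrite Ea. lra.
      + simpl. rewrite Eb. lra.
      + simpl in Hfz. exists (g z).
        assert (a < z). { destruct (Req_dec a z) as [<-|]; [rewrite Ea in Hfz; lra| lra]. }
        assert (z < b). { destruct (Req_dec z b) as [->|]; [rewrite Eb in Hfz; lra| lra]. }
        split; [|split]; auto.
        * rewrite <- Ea. apply Hllle; try exact I. apply Hmono; unfold cint; lra.
        * apply (Htle _ q); try exact I.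
          -- rewrite <- Eb. apply Hllle; try exact I. apply Hmono; unfold cint; lra.
          -- apply Hllle; try exact I; auto. }
    assert (Hpos : forall n, 0 < Rmin eps (/ INR (S n))).
    { intros n. apply Rmin_pos; [lra|]. apply Rinv_0_lt_compat, lt_0_INR; lia. }
    destruct (choice_nat (fun n x => ll x p /\ d p x < Rmin eps (/ INR (S n)))) as [xs Hxs].
    { intros n. exact (proj1 (approx p HLLS (Hpos n))). }
    destruct (choice_nat (fun n y => ll p y /\ d p y < Rmin eps (/ INR (S n)))) as [ys Hys].
    { intros n. exact (proj2 (approx p HLLS (Hpos n))). }
    destruct (choice_nat (fun n r => le (xs n) r /\ le r (ys n) /\ d p r = eps)) as [rs Hrs].
    { intros n. destruct (Hxs n) as [H1 H2]. destruct (Hys n) as [H3 _].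
      apply L3; auto. unfold Rmin in H2; destruct Rle_dec; lra. }
    destruct (@cluster X d K rs Hm HK) as [c [Kc Hc]].
    { intros n. apply VK, HVb. destruct (Hrs n) as [_ [_ ->]]. lra. }
    assert (Hsmall : forall rho, 0 < rho -> exists n, d c (rs n) < rho /\
               d p (xs n) < rho /\ d p (ys n) < rho).
    { intros rho Hrho. destruct (archimed_cor1 rho Hrho) as [N [HN HN0]].
      destruct (Hc rho Hrho N) as [n [Hn Hd]]. exists n.
      pose proof (inv_S_lt N n HN0 Hn).
      destruct (Hxs n) as [_ H1]. destruct (Hys n) as [_ H2].
      unfold Rmin in H1, H2; destruct Rle_dec; lra. }
    assert (K1 : K_plus d le p c).
    { intros Rel Htr Hcl Hle. apply NNPP. intros nR.
      destruct (Hcl _ _ nR) as [rho [Hrho Hr]].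
      destruct (Hsmall rho Hrho) as [n [H1 [H2 H3]]].
      apply (Hr (xs n) (rs n)); auto.
      apply Hle. apply (Hrs n). }
    assert (K2 : K_plus d le c p).
    { intros Rel Htr Hcl Hle. apply NNPP. intros nR.
      destruct (Hcl _ _ nR) as [rho [Hrho Hr]].
      destruct (Hsmall rho Hrho) as [n [H1 [H2 H3]]].
      apply (Hr (rs n) (ys n)); auto.
      apply Hle. apply (Hrs n). }
    pose proof (HSC p c K1 K2) as <-.
    destruct (Hsmall eps (proj1 Heps)) as [n [H1 _]].
    destruct (Hrs n) as [_ [_ H2]]. lra.
Qed.
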